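(* In the setting below, for fixed $\boldsymbol\lambda\in(0,\infty)^K$, $$\max_{1\le i\le n}\frac1n\Big|\operatorname{Tr}\Big(\mathbf M_i^2\sum_{j\ne i}\frac{z_jz_j^\top}{n}\Big)-\operatorname{Tr}\Big(\mathbf M^2\frac{\mathbf Z^\top\mathbf Z}{n}\Big)\Big|\to0\quad\text{almost surely.}$$
   Context: Setting: $n\to\infty$, $p=p(n)$ features in $K$ fixed disjoint groups $\mathcal G_g$ with $p_g/n\to\gamma_g>0$. $\mathbf Z$ is $n\times p$ with rows $z_i^\top$, where the $z_i$ are i.i.d. vectors with i.i.d. entries of mean $0$, variance $1$ and uniformly bounded $(8+\eta)$-th moments for some $\eta>0$. $\boldsymbol\Sigma$ is a deterministic $p\times p$ covariance matrix with eigenvalues in $[h_1,h_2]$, fixed $h_1,h_2>0$. $\boldsymbol\Lambda$ is the $p\times p$ diagonal matrix with entry $\lambda_g$ at $j\in\mathcal G_g$. $\mathbf M=(\mathbf Z^\top\mathbf Z/n+\boldsymbol\Sigma^{-1/2}\boldsymbol\Lambda\boldsymbol\Sigma^{-1/2})^{-1}$ and $\mathbf M_i=(\mathbf Z^\top\mathbf Z/n+\boldsymbol\Sigma^{-1/2}\boldsymbol\Lambda\boldsymbol\Sigma^{-1/2}-z_iz_i^\top/n)^{-1}$. *)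

(* Defs.v *)
From HB Require Import structures.
From mathcomp Require Import all_boot all_order all_algebra.
From mathcomp Require Import all_classical all_reals all_analysis.
Set Implicit Arguments. Unset Strict Implicit. Unset Printing Implicit Defensive.
Import Order.TTheory GRing.Theory Num.Theory.
Import numFieldNormedType.Exports.
Local Open Scope classical_set_scope.
Local Open Scope ring_scope.

(* Mutual independence of a finite family of real random variables:
   product rule for every choice of Borel sets (taking B i = setT recovers
   every finite subfamily). *)
Definition mutually_independent d (T : measurableType d) (R : realType)
  (P : probability T R) (I : finType) (X : I -> T -> R) : Prop :=
  forall B : I -> set R, (forall i, measurable (B i)) ->
    P (\bigcap_(i in [set: I]) (X i @^-1` B i)) = (\prod_(i : I) P (X i @^-1` B i))%E.

Definition identically_distributed d (T : measurableType d) (R : realType)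
  (P : probability T R) (I : Type) (X : I -> T -> R) : Prop :=
  forall i j (B : set R), measurable B -> P (X i @^-1` B) = P (X j @^-1` B).

Definition is_inv_sqrt (R : realType) (m : nat) (Sig S : 'M[R]_m) : Prop :=
  S^T = S /\ (forall a, eigenvalue S a -> 0 < a) /\ S *m S = invmx Sig.

Definition outer_row (R : realType) (n p : nat) (Z : 'M[R]_(n, p)) (i : 'I_n)
  : 'M[R]_p := (row i Z)^T *m row i Z.

(* Main.v *)
Require Import Defs.
From HB Require Import structures.
From mathcomp Require Import all_boot all_order all_algebra.
From mathcomp Require Import all_classical all_reals all_analysis.
From mathcomp Require Import complex spectral sesquilinear.
From mathcomp Require Import ring lra.
Import Order.TTheory GRing.Theory Num.Theory.
Import numFieldNormedType.Exports.
Local Open Scope classical_set_scope.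
Local Open Scope ring_scope.
Set Implicit Arguments. Unset Strict Implicit. Unset Printing Implicit Defensive.

Section Spec.
Local Open Scope sesquilinear_scope.
Variable R : realType.
Local Notation C := (R[i]).
Local Notation phi := (real_complex R).

Lemma spec_bound m (Q : 'M[R]_m) (h2 : R) :
  Q^T = Q -> (forall a, eigenvalue Q a -> 0 <= a <= h2) ->
  forall w : 'rV[R]_m, (w *m Q *m Q *m w^T) 0 0 <= h2 * (w *m Q *m w^T) 0 0.
Proof.
move=> Qsym Qeig w.
pose QC := map_mx phi Q.
have QCreal : QC \is a realmx.
  by apply/mxOverP => i j; rewrite mxE /= complex_real.
have QCsym : QC \is symmetricmx.
  apply/is_hermitianmxP; rewrite expr0 scale1r map_mx_id //.
  by rewrite /QC map_trmx Qsym.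
have QCherm : QC \is hermsymmx by exact: (realsym_hermsym QCsym QCreal).
have /orthomx_spectralP QCE := hermitian_normalmx QCherm.
set P := spectralmx QC in QCE; set d := spectral_diag QC in QCE.
have Pu : P \is unitarymx by exact: spectral_unitarymx.
have dreal := hermitian_spectral_diag_real QCherm.
rewrite invmx_unitary // in QCE.
have PP : P *m P^t* = 1%:M by apply/unitarymxP.
have tsm : forall a b c (X : 'M[C]_(a, b)) (Y : 'M[C]_(b, c)), (X *m Y)^t* = Y^t* *m X^t*.
  by move=> a b c X Y; rewrite trmx_mul map_mxM.
pose wC := map_mx phi w.
have E : forall X : 'M[R]_m, map_mx phi (w *m X *m w^T) = wC *m map_mx phi X *m wC^t*.
  move=> X; rewrite !map_mxM map_trmx; congr (_ *m _).
  by apply/matrixP => i j; rewrite !mxE conj_Creal // complex_real.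
pose u := wC *m P^t*.
have Eu : u^t* = P *m wC^t* by rewrite tsm trmxCK.
have E1 : wC *m QC *m QC *m wC^t* = u *m diag_mx d *m diag_mx d *m u^t*.
  rewrite Eu QCE /u !mulmxA; congr (_ *m _ *m _).
  by rewrite -!mulmxA (mulmxA P) PP mul1mx.
have E2 : wC *m QC *m wC^t* = u *m diag_mx d *m u^t*.
  by rewrite Eu QCE /u !mulmxA.
have dk : forall k, exists a, d 0 k = phi a /\ 0 <= a <= h2.
  move=> k; have := mxOverP dreal 0 k.
  case E3: (d 0 k) => [a b]; rewrite complex_real => /eqP b0; subst b.
  exists a; split => //; apply: Qeig.
  have : eigenvalue QC (d 0 k).
    apply/eigenvalueP; exists (row k P).
      rewrite -row_mul QCE !mulmxA PP mul1mx mul_diag_mx.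
      by apply/rowP => j; rewrite !mxE.
    apply/eqP => rk0.
    have := congr1 (fun X : 'rV[C]_m => X 0 k) (row_mul k P (P^t*)).
    by rewrite rk0 mul0mx PP !mxE eqxx /= => /eqP; rewrite oner_eq0.
  rewrite eigenvalue_root_char /QC -map_char_poly E3.
  rewrite eigenvalue_root_char /root.
  by rewrite (_ : (a +i* 0)%C = phi a) // horner_map fmorph_eq0.
suff : 0 <= phi (h2 * (w *m Q *m w^T) 0 0 - (w *m Q *m Q *m w^T) 0 0).
  by rewrite ler0c subr_ge0.
have -> : phi (h2 * (w *m Q *m w^T) 0 0 - (w *m Q *m Q *m w^T) 0 0) =
   phi h2 * (map_mx phi (w *m Q *m w^T)) 0 0 - (map_mx phi (w *m Q *m Q *m w^T)) 0 0.
  by rewrite !mxE rmorphB rmorphM.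
rewrite E -(mulmxA w Q Q) E map_mxM -/QC -/wC (mulmxA wC QC QC) E1 E2.
clearbody u.
rewrite !mul_mx_diag !mxE mulr_sumr -sumrB; apply: sumr_ge0 => k _.
rewrite !mxE.
have [a [-> /andP [a0 ah]]] := dk k.
set z := u 0 k.
have -> : phi h2 * (z * phi a * z^*) - z * phi a * phi a * z^* =
   phi (h2 * a - a * a) * (z * z^*).
  by rewrite rmorphB !rmorphM; ring.
apply: mulr_ge0; last exact: mul_conjC_ge0.
rewrite ler0c subr_ge0; apply: ler_wpM2r => //.
Qed.
End Spec.

Section QF.
Variable R : realFieldType.
Variable m : nat.
Implicit Types (y z u : 'rV[R]_m) (X Y : 'M[R]_m).

Definition qf y X : R := (y *m X *m y^T) 0 0.
Definition dot y z : R := (y *m z^T) 0 0.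

Lemma dotE y z : dot y z = \sum_j y 0 j * z 0 j.
Proof. by rewrite /dot mxE; apply: eq_bigr => j _; rewrite mxE. Qed.

Lemma dotC y z : dot y z = dot z y.
Proof. by rewrite !dotE; apply: eq_bigr => j _; rewrite mulrC. Qed.

Lemma dotDl y y' z : dot (y + y') z = dot y z + dot y' z.
Proof. by rewrite /dot mulmxDl mxE. Qed.

Lemma dotZl a y z : dot (a *: y) z = a * dot y z.
Proof. by rewrite /dot -scalemxAl mxE. Qed.

Lemma dotDr y z z' : dot y (z + z') = dot y z + dot y z'.
Proof. by rewrite dotC dotDl !(dotC z) (dotC z'). Qed.

Lemma dotZr a y z : dot y (a *: z) = a * dot y z.
Proof. by rewrite dotC dotZl dotC. Qed.

Lemma dotNl y z : dot (- y) z = - dot y z.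
Proof. by rewrite -scaleN1r dotZl mulN1r. Qed.

Lemma dotNr y z : dot y (- z) = - dot y z.
Proof. by rewrite dotC dotNl dotC. Qed.

Lemma dot_ge0 y : 0 <= dot y y.
Proof. by rewrite dotE; apply: sumr_ge0 => j _; rewrite -expr2 sqr_ge0. Qed.

Lemma dot_gt0 y : y != 0 -> 0 < dot y y.
Proof.
move=> yn0; rewrite lt_def dot_ge0 andbT; apply: contraNN yn0.
rewrite dotE psumr_eq0 => [/allP H|j _]; last by rewrite -expr2 sqr_ge0.
apply/eqP/rowP => j; have := H j (mem_index_enum j).
by rewrite /= -expr2 sqrf_eq0 mxE => /eqP.
Qed.

Lemma qf_dot y X : qf y X = dot (y *m X) y.
Proof. by []. Qed.

Lemma qfD y X Y : qf y (X + Y) = qf y X + qf y Y.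
Proof. by rewrite /qf mulmxDr mulmxDl mxE. Qed.

Lemma qfZ y a X : qf y (a *: X) = a * qf y X.
Proof. by rewrite /qf -scalemxAr -scalemxAl mxE. Qed.

Lemma qf_outer y u : qf y (u^T *m u) = dot y u ^+ 2.
Proof.
rewrite /qf /dot expr2 !mulmxA -(mulmxA _ u) mxE big_ord1.
congr (_ * _); rewrite -{1}(trmxK u) -trmx_mul mxE.
by [].
Qed.

Lemma qf_sym y z X : X^T = X -> dot (y *m X) z = dot (z *m X) y.
Proof.
move=> Xs; rewrite /dot.
transitivity ((y *m X *m z^T)^T 0 0); first by rewrite [RHS]mxE.
by rewrite trmx_mul trmx_mul trmxK Xs mulmxA.
Qed.

End QF.
Section RB.
Variable R : realFieldType.
Lemma real_bound (be q r t a zB b : R) : 0 < be -> 0 < q -> 0 <= r -> q * t <= 1 ->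
  be * r <= t -> be * a <= r -> zB <= a -> 2 * b <= t + zB -> - (2 * b) <= t + zB ->
  `| q * r - 2 * q * b + q ^+ 2 * r * t | <= 2 / be + 1 + 1 / be ^+ 2.
Proof.
move=> be0 q0 r0 qt1 ber bea zBa b1 b2.
have h1 : q * r <= 1 / be.
  rewrite ler_pdivlMr // -mulrA (mulrC r); apply: le_trans qt1.
  by rewrite ler_pM2l.
have qr0 : 0 <= q * r by rewrite mulr_ge0 // ltW.
have h2 : q ^+ 2 * r * t <= q * r.
  have -> : q ^+ 2 * r * t = (q * r) * (q * t) by ring.
  by rewrite ler_piMr.
have h2' : 0 <= q ^+ 2 * r * t.
  have -> : q ^+ 2 * r * t = (q * r) * (q * t) by ring.
  apply: mulr_ge0 => //; apply: mulr_ge0; first exact: ltW.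
  by apply: le_trans ber; rewrite mulr_ge0 // ltW.
have h3 : q * a <= 1 / be ^+ 2.
  have : q * a <= q * r / be.
    by rewrite ler_pdivlMr // -mulrA ler_pM2l // mulrC.
  move/le_trans; apply.
  have -> : 1 / be ^+ 2 = (1 / be) / be.
    by field; rewrite gt_eqF.
  by rewrite ler_pM2r ?invr_gt0.
have h4a : q * (2 * b) <= 1 + q * a.
  have : q * (2 * b) <= q * t + q * zB by rewrite -mulrDr ler_pM2l.
  move/le_trans; apply; apply: lerD => //; rewrite ler_pM2l //.
have h4b : - (q * (2 * b)) <= 1 + q * a.
  have : - (q * (2 * b)) <= q * t + q * zB by rewrite -mulrN -mulrDr ler_pM2l.
  move/le_trans; apply; apply: lerD => //; rewrite ler_pM2l //.
have -> : q * r - 2 * q * b + q ^+ 2 * r * t = q * r - q * (2 * b) + q ^+ 2 * r * t.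
  by ring.
rewrite ler_norml; apply/andP; split; lra.
Qed.
End RB.

Section Main.
Variable R : realFieldType.
Variable m : nat.

Lemma pd_unit (X : 'M[R]_m) be : 0 < be -> (forall y, be * dot y y <= qf y X) -> X \in unitmx.
Proof.
move=> be0 H; rewrite -row_free_unit -kermx_eq0; apply/negPn/negP => Kn0.
set y := nz_row (kermx X).
have yn0 : y != 0 by rewrite nz_row_eq0.
have yX : y *m X = 0 by apply/sub_kermxP; exact: nz_row_sub.
have := H y; rewrite /qf yX mul0mx mxE.
have := mulr_gt0 be0 (dot_gt0 yn0).
by move=> gt le; have := lt_le_trans gt le; rewrite ltxx.
Qed.

Lemma tr_outer (y z : 'rV[R]_m) : \tr (y^T *m z) = dot z y.
Proof. by rewrite mxtrace_mulC trace_mx11. Qed.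


Lemma main_bound (B G H : 'M[R]_m) (c be : R) (u : 'rV[R]_m) :
  0 < be -> 0 < c -> B^T = B -> G^T = G ->
  (forall y, be * dot y y <= qf y B) -> (forall y, 0 <= qf y G) ->
  H = G + c *: (u^T *m u) ->
  `| \tr (invmx (G + B) *m invmx (G + B) *m G) - \tr (invmx (H + B) *m invmx (H + B) *m H) |
    <= 2 / be + 1 + 1 / be ^+ 2.
Proof.
move=> be0 c0 BS GS Bpd Gpsd HE.
set Ai := G + B; set N := invmx Ai.
have AiS : Ai^T = Ai by rewrite /Ai raddfD /= GS BS.
have Aipd : forall y, be * dot y y <= qf y Ai.
  by move=> y; rewrite qfD -[X in X <= _]add0r lerD.
have Aiu : Ai \in unitmx := pd_unit be0 Aipd.
have NS : N^T = N by rewrite /N trmx_inv AiS.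
have NAi : N *m Ai = 1%:M by rewrite /N mulVmx.
have AiN : Ai *m N = 1%:M by rewrite /N mulmxV.
set y := u *m N.
have yT : y^T = N *m u^T by rewrite /y trmx_mul NS.
set al := qf u N.
have alE : al = qf y Ai.
  by rewrite /al /qf yT /y !mulmxA -(mulmxA u N Ai) NAi mulmx1.
have al0 : 0 <= al.
  rewrite alE; apply: le_trans (Aipd y); apply: mulr_ge0; [exact: ltW | exact: dot_ge0].
set s := c * al.
have s0 : 0 <= s by rewrite mulr_ge0 // ltW.
have s1 : 1 + s != 0 by rewrite gt_eqF // ltr_pwDl.
set q := c / (1 + s).
have q0 : 0 < q by rewrite divr_gt0 // ltr_pwDl.
have hq : q * (1 + s) = c by rewrite /q divfK.
set W := u^T *m u *m N.
have e1 : Ai *m (y^T *m y) = u^T *m u *m N.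
  by rewrite yT /y !mulmxA AiN mul1mx.
have e3 : (u^T *m u) *m (y^T *m y) = al *: W.
  rewrite yT /y /W.
  have -> : u^T *m u *m (N *m u^T *m (u *m N)) = u^T *m (u *m N *m u^T) *m (u *m N).
    by rewrite !mulmxA.
  rewrite [u *m N *m u^T]mx11_scalar -/(qf u N) -/al.
  by rewrite mul_mx_scalar -scalemxAl !mulmxA.
set A := H + B.
have AE : A = Ai + c *: (u^T *m u) by rewrite /A HE /Ai addrAC.
have AX : A *m (N - q *: (y^T *m y)) = 1%:M.
  rewrite AE mulmxDl !mulmxBr AiN -!scalemxAr e1 -/W -!scalemxAl e3 -/W.
  rewrite !scalerA -scalerBl.
  have -> : c - q * c * al = q.
    rewrite -{1}hq /s; ring.
  by rewrite subrK.
have [Au _] := mulmx1_unit AX.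
have ME : invmx A = N - q *: (y^T *m y).
  by rewrite -[RHS]mul1mx -(mulVmx Au) -mulmxA AX mulmx1.
set M := invmx A.
have MA : M *m A = 1%:M by rewrite /M mulVmx.
have trN : \tr (N *m N *m G) = \tr N - \tr (N *m N *m B).
  have -> : G = Ai - B by rewrite /Ai addrK.
  by rewrite mulmxBr -(mulmxA N N Ai) NAi mulmx1 raddfB.
have trM : \tr (M *m M *m H) = \tr M - \tr (M *m M *m B).
  have -> : H = A - B by rewrite /A addrK.
  by rewrite mulmxBr -(mulmxA M M A) MA mulmx1 raddfB.
rewrite trN trM.
set r := dot y y.
set t := qf y B.
set z := y *m N.
have zT : z^T = N *m y^T by rewrite /z trmx_mul NS.
set b := dot (y *m B) z.
have trNM : \tr N - \tr M = q * r.
  by rewrite /M ME raddfB /= opprB addrC subrK mxtraceZ tr_outer.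
have trMMB : \tr (M *m M *m B) = \tr (N *m N *m B) - 2 * q * b + q ^+ 2 * r * t.
  have yy : y *m y^T = r%:M by rewrite [LHS]mx11_scalar.
  have Y2 : (y^T *m y) *m (y^T *m y) = r *: (y^T *m y).
    by rewrite mulmxA -(mulmxA y^T y) yy mul_mx_scalar scalemxAl.
  have t1 : \tr (N *m (y^T *m y) *m B) = b.
    have -> : N *m (y^T *m y) *m B = (N *m y^T) *m (y *m B) by rewrite !mulmxA.
    by rewrite mxtrace_mulC trace_mx11 /b /dot zT mulmxA.
  have t2 : \tr ((y^T *m y) *m N *m B) = b.
    have -> : (y^T *m y) *m N *m B = y^T *m (z *m B) by rewrite !mulmxA.
    by rewrite mxtrace_mulC trace_mx11 -/(dot (z *m B) y) (qf_sym _ _ BS).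
  have t3 : \tr ((y^T *m y) *m (y^T *m y) *m B) = r * t.
    by rewrite Y2 -scalemxAl mxtraceZ -mulmxA tr_outer /t /qf.
  rewrite /M ME !mulmxBl !mulmxBr !mulmxBl -!scalemxAl -!scalemxAr -!scalemxAl.
  by rewrite !raddfB /= !mxtraceZ t1 t2 t3; ring.
have -> : \tr N - \tr (N *m N *m B) - (\tr M - \tr (M *m M *m B)) =
   q * r - 2 * q * b + q ^+ 2 * r * t.
  by rewrite trMMB -trNM; ring.
have qfpos : forall v, 0 <= qf v B.
  by move=> v; apply: le_trans (Bpd v); rewrite mulr_ge0 ?dot_ge0 // ltW.
have zAi : z *m Ai = y by rewrite /z -mulmxA NAi mulmx1.
set a := qf z Ai.
have aE : a = dot y z by rewrite /a qf_dot zAi.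
have aB : qf z B <= a by rewrite /a /Ai qfD lerDr.
have tal : t <= al by rewrite alE /Ai qfD /t lerDr.
apply: (real_bound (a := a) (zB := qf z B)) => //.
- exact: dot_ge0.
- have h : q * (c * t) <= q * (1 + s).
    have ct : c * t <= s by rewrite /s ler_pM2l.
    rewrite ler_pM2l //; lra.
  rewrite hq mulrCA -[X in _ <= X]mulr1 in h.
  by rewrite -(ler_pM2l c0).
- exact: Bpd.
- have h1 := Aipd z; rewrite -/a in h1.
  have h2 : 0 <= dot (y - be *: z) (y - be *: z) := dot_ge0 _.
  rewrite !(dotDl, dotDr, dotNl, dotNr, dotZl, dotZr) -/r (dotC z y) -aE in h2.
  have h3 : be * (be * dot z z) <= be * a by rewrite ler_pM2l.
  lra.
- have h := qfpos (y - z).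
  rewrite qf_dot mulmxBl !(dotDl, dotDr, dotNl, dotNr) -!qf_dot -/t -/b (qf_sym z y BS) -/b in h.
  lra.
- have h := qfpos (y + z).
  rewrite qf_dot mulmxDl !(dotDl, dotDr) -!qf_dot -/t -/b (qf_sym z y BS) -/b in h.
  lra.
Qed.
End Main.

Section Glue.

Lemma sig_facts (R : realType) m (Sig : 'M[R]_m) (h1 h2 : R) :
  0 < h1 -> 0 < h2 -> Sig^T = Sig -> (forall a, eigenvalue Sig a -> h1 <= a <= h2) ->
  Sig \in unitmx /\ forall y, h2^-1 * dot y y <= qf y (invmx Sig).
Proof.
move=> h10 h20 SS SE.
have Su : Sig \in unitmx.
  rewrite -row_free_unit -kermx_eq0; apply/negPn/negP => Kn0.
  set y := nz_row (kermx Sig).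
  have yn0 : y != 0 by rewrite nz_row_eq0.
  have yX : y *m Sig = 0 by apply/sub_kermxP; exact: nz_row_sub.
  have : eigenvalue Sig 0 by apply/eigenvalueP; exists y => //; rewrite yX scale0r.
  move=> /SE /andP [h _]; have := lt_le_trans h10 h; by rewrite ltxx.
split => // y.
set w := y *m invmx Sig.
have yE : y = w *m Sig by rewrite /w mulmxKV.
have e1 : qf y (invmx Sig) = (w *m Sig *m w^T) 0 0.
  by rewrite /qf {1}yE mulmxK // yE trmx_mul SS mulmxA.
have e2 : dot y y = (w *m Sig *m Sig *m w^T) 0 0.
  by rewrite /dot yE trmx_mul SS !mulmxA.
rewrite e1 e2 ler_pdivrMl //.
apply: spec_bound => // a /SE /andP [ha hb]; rewrite hb andbT.
exact: le_trans (ltW h10) ha.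
Qed.

Lemma B_facts (R : realType) m (Sig S : 'M[R]_m) (l : 'I_m -> R) (lmin h2 : R) :
  0 < h2 -> 0 < lmin -> (forall j, lmin <= l j) -> is_inv_sqrt Sig S ->
  (forall y, h2^-1 * dot y y <= qf y (invmx Sig)) ->
  (S *m diag_mx (\row_j l j) *m S)^T = S *m diag_mx (\row_j l j) *m S /\
  forall y, (lmin / h2) * dot y y <= qf y (S *m diag_mx (\row_j l j) *m S).
Proof.
move=> h20 lmin0 lminle [SS [_ SSE]] Sb; split.
  by rewrite !trmx_mul SS tr_diag_mx mulmxA.
move=> y.
have e1 : qf y (S *m diag_mx (\row_j l j) *m S) =
    \sum_j ((y *m S) 0 j) ^+ 2 * l j.
  rewrite /qf.
  have -> : y *m (S *m diag_mx (\row_j l j) *m S) *m y^T =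
      (y *m S) *m diag_mx (\row_j l j) *m (y *m S)^T.
    by rewrite trmx_mul SS !mulmxA.
  rewrite mul_mx_diag mxE; apply: eq_bigr => j _; rewrite !mxE; ring.
have e2 : qf y (invmx Sig) = \sum_j ((y *m S) 0 j) ^+ 2.
  rewrite -SSE /qf.
  have -> : y *m (S *m S) *m y^T = (y *m S) *m (y *m S)^T.
    by rewrite trmx_mul SS !mulmxA.
  by rewrite [LHS]mxE; apply: eq_bigr => j _; rewrite expr2 [_^T _ _]mxE.
have := Sb y; rewrite e2 => h.
rewrite e1; apply: (le_trans (y := lmin * \sum_j ((y *m S) 0 j) ^+ 2)).
  by rewrite -mulrA ler_pM2l.
rewrite mulr_sumr; apply: ler_sum => j _.
by rewrite [X in X <= _]mulrC ler_wpM2l // sqr_ge0.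
Qed.

Lemma ZZ_sum (R : realType) n p (Z : 'M[R]_(n, p)) :
  Z^T *m Z = \sum_j outer_row Z j.
Proof.
apply/matrixP => a b; rewrite !mxE summxE; apply: eq_bigr => j _.
by rewrite !mxE big_ord1 !mxE.
Qed.

Lemma per_term (R : realType) n p (Z : 'M[R]_(n, p)) (B : 'M[R]_p) (be : R)
  (i : 'I_n) :
  0 < be -> B^T = B -> (forall y, be * dot y y <= qf y B) ->
  `| \tr (invmx (n%:R^-1 *: (Z^T *m Z) + B - n%:R^-1 *: outer_row Z i) *m
          invmx (n%:R^-1 *: (Z^T *m Z) + B - n%:R^-1 *: outer_row Z i) *m
          (n%:R^-1 *: \sum_(j < n | j != i) outer_row Z j))
     - \tr (invmx (n%:R^-1 *: (Z^T *m Z) + B) *m invmx (n%:R^-1 *: (Z^T *m Z) + B)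
          *m (n%:R^-1 *: (Z^T *m Z))) | <= 2 / be + 1 + 1 / be ^+ 2.
Proof.
move=> be0 BS Bpd.
have n0 : (0 < n)%N by apply: leq_ltn_trans (leq0n i) (ltn_ord i).
have c0 : 0 < n%:R^-1 :> R by rewrite invr_gt0 ltr0n.
set G := n%:R^-1 *: \sum_(j < n | j != i) outer_row Z j.
have HE : n%:R^-1 *: (Z^T *m Z) = G + n%:R^-1 *: ((row i Z)^T *m row i Z).
  by rewrite ZZ_sum (bigD1 i) //= scalerDr addrC.
have -> : n%:R^-1 *: (Z^T *m Z) + B - n%:R^-1 *: outer_row Z i = G + B.
  by rewrite HE /outer_row addrAC addrK.
apply: main_bound HE => //.
- rewrite /G linearZ /= raddf_sum /=; congr (_ *: _); apply: eq_bigr => j _.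
  by rewrite /outer_row trmx_mul trmxK.
- move=> y; rewrite /G qfZ; apply: mulr_ge0; first exact: ltW.
  apply: (big_ind (fun X => 0 <= qf y X)).
  + by rewrite /qf mulmx0 mul0mx mxE.
  + by move=> X Y hX hY; rewrite qfD addr_ge0.
  + by move=> j _; rewrite /outer_row qf_outer sqr_ge0.
Qed.

End Glue.

Theorem lemma5 (R : realType) (d : measure_display) (T : measurableType d)
  (P : probability T R)
  (K : nat) (p : nat -> nat) (grp : forall n, 'I_(p n) -> 'I_K)
  (gam : 'I_K -> R)
  (x : forall n, 'I_n -> 'I_(p n) -> T -> R)
  (eta C h1 h2 : R) (lam : 'I_K -> R)
  (Sig : forall n, 'M[R]_(p n)) (S : forall n, 'M[R]_(p n)) :
  (forall g, 0 < gam g) ->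
  (forall g, (fun n => #|[pred j | grp n j == g]|%:R / n%:R) @ \oo --> gam g) ->
  0 < eta ->
  (forall n i j, measurable_fun setT (x n i j)) ->
  (forall n, mutually_independent P (fun ij : 'I_n * 'I_(p n) => x n ij.1 ij.2)) ->
  (forall n, identically_distributed P (fun ij : 'I_n * 'I_(p n) => x n ij.1 ij.2)) ->
  (forall n i j, (\int[P]_w (x n i j w)%:E = 0)%E) ->
  (forall n i j, (\int[P]_w ((x n i j w) ^+ 2)%:E = 1)%E) ->
  (forall n i j, (\int[P]_w (`|x n i j w| `^ (8 + eta))%:E <= C%:E)%E) ->
  0 < h1 -> 0 < h2 ->
  (forall n, (Sig n)^T = Sig n) ->
  (forall n a, eigenvalue (Sig n) a -> h1 <= a <= h2) ->
  (forall n, is_inv_sqrt (Sig n) (S n)) ->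
  (forall g, 0 < lam g) ->
  let Lam n : 'M[R]_(p n) := diag_mx (\row_j lam (grp n j)) in
  let Z n w : 'M[R]_(n, p n) := \matrix_(i, j) x n i j w in
  let A n w : 'M[R]_(p n) := n%:R^-1 *: ((Z n w)^T *m Z n w) + S n *m Lam n *m S n in
  let M n w : 'M[R]_(p n) := invmx (A n w) in
  let Mi n w (i : 'I_n) : 'M[R]_(p n) :=
    invmx (A n w - n%:R^-1 *: outer_row (Z n w) i) in
  let dev n w : R :=
    \big[Num.max/0]_(i < n)
      (n%:R^-1 * `| \tr (Mi n w i *m Mi n w i *m
                          (n%:R^-1 *: \sum_(j < n | j != i) outer_row (Z n w) j))
                    - \tr (M n w *m M n w *m (n%:R^-1 *: ((Z n w)^T *m Z n w))) |) in
  {ae P, forall w, dev n w @[n --> \oo] --> 0}.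
Proof.
move=> _ _ _ _ _ _ _ _ _ h10 h20 SigS SigE Sinv lam0 Lam Z A M Mi dev.
apply: aeW => w.
set lmin := \big[Num.min/1]_(g < K) lam g.
have lmin0 : 0 < lmin by apply: lt_bigmin.
have lminle : forall g, lmin <= lam g by move=> g; exact: bigmin_le.
set be := lmin / h2.
have be0 : 0 < be by rewrite divr_gt0.
set Kc := 2 / be + 1 + 1 / be ^+ 2.
have Kc0 : 0 <= Kc.
  by rewrite /Kc !addr_ge0 // ?divr_ge0 // ?exprn_ge0 // ltW.
have bound : forall n, (0 < n)%N -> dev n w <= Kc / n%:R.
  move=> n n0; rewrite /dev; apply: bigmax_le => [|i _].
    by rewrite divr_ge0.
  have [Su Sb] := sig_facts h10 h20 (SigS n) (SigE n).
  have [BS Bpd] := B_facts (l := fun j => lam (grp n j)) h20 lmin0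
      (fun j => lminle (grp n j)) (Sinv n) Sb.
  have := per_term (Z n w) i be0 BS Bpd.
  rewrite /Mi /M /A /Lam -/be -/Kc => h.
  rewrite mulrC ler_wpM2r // invr_ge0 ler0n //.
have dev0 : forall n, 0 <= dev n w.
  by move=> n; rewrite /dev; exact: bigmax_ge_id.
apply: (@squeeze_cvgr _ _ _ _ (fun=> 0) (fun n => (2 * Kc) * harmonic n)).
- exists 1%N => // n /= n1; rewrite dev0 /=.
  apply: le_trans (bound n n1) _.
  rewrite /harmonic /= mulrC.
  have h : n%:R^-1 <= 2 / n.+1%:R :> R.
    rewrite ler_pdivlMr ?ltr0n // -addn1 natrD mulrDr mulVf ?mulr1;
      last by rewrite pnatr_eq0 -lt0n.
    have : n%:R^-1 <= 1 :> R by rewrite invf_le1 // ?ler1n // ltr0n.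
    lra.
  rewrite (mulrC 2) -mulrA [X in X <= _]mulrC.
  by rewrite ler_wpM2l.
- first [ exact: (@cvg_cst R) | apply: cvg_cst | exact: cvgr_cst | idtac ].
- rewrite -(mulr0 (2 * Kc)).
  apply: cvgM.
  first [ exact: (@cvg_cst R) | apply: cvg_cst | exact: cvgr_cst | idtac ].
  exact: cvg_harmonic.
Qed.
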